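(* Let $(u_j)_{j\ge0}$ be the sequence defined by $u_j=k$ if $j=2^k$ for some $k\in\mathbb{N}$, and $u_j=0$ otherwise. Then $(u_j)_{j\ge0}\notin\ell^\infty(\mathbb{N})$ and \[\sup_{\varepsilon>0}\,\varepsilon\sum_{j\ge0}2^{-j\varepsilon}u_j\le\frac{2}{e\ln 2}.\] *)

(* Defs.v *)
From Stdlib Require Export Reals.
From Coquelicot Require Export Coquelicot.
Open Scope R_scope.

Definition is_u (u : nat -> R) : Prop :=
  (forall k : nat, u (2 ^ k)%nat = INR k) /\
  (forall j : nat, (forall k : nat, j <> (2 ^ k)%nat) -> u j = 0).

(* Main.v *)
Require Import Defs.
From Stdlib Require Import Reals Lra Lia Arith.
From Coquelicot Require Import Coquelicot.
Open Scope R_scope.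

Lemma key_exp (y : R) : y * exp (- y) <= exp (-1).
Proof.
  assert (H := exp_ineq1_le (y - 1)).
  assert (E : exp (-1) = exp (y - 1) * exp (- y)).
  { rewrite <- exp_plus. f_equal. ring. }
  rewrite E. apply Rmult_le_compat_r. left; apply exp_pos. lra.
Qed.

Lemma term_bound (eps : R) (k : nat) : 0 < eps ->
  eps * (Rpower 2 (- (INR (2 ^ k)%nat * eps)) * INR k)
  <= INR k / 2 ^ k / (exp 1 * ln 2).
Proof.
  intros He. unfold Rpower. rewrite pow_INR. replace (INR 2) with 2 by (simpl; ring).
  assert (Hp : 0 < 2 ^ k) by (apply pow_lt; lra).
  assert (Hl : 0 < ln 2) by (assert (H := ln_lt_2); lra).
  assert (He1 : 0 < exp 1) by apply exp_pos.
  set (y := 2 ^ k * eps * ln 2).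
  replace (- (2 ^ k * eps) * ln 2) with (- y) by (unfold y; ring).
  assert (K := key_exp y).
  assert (Em : exp (-1) = / exp 1).
  { replace (-1) with (- (1)) by ring; apply exp_Ropp. }
  assert (Hk : 0 <= INR k) by apply pos_INR.
  assert (eps * exp (- y) <= / (exp 1 * ln 2 * 2 ^ k)).
  { replace (eps * exp (- y)) with (y * exp (- y) / (ln 2 * 2 ^ k))
      by (unfold y; field; lra).
    replace (/ (exp 1 * ln 2 * 2 ^ k)) with (exp (-1) / (ln 2 * 2 ^ k))
      by (rewrite Em; field; lra).
    unfold Rdiv. apply Rmult_le_compat_r; [|exact K].
    left; apply Rinv_0_lt_compat; apply Rmult_lt_0_compat; lra. }
  replace (INR k / 2 ^ k / (exp 1 * ln 2)) with
     (INR k * / (exp 1 * ln 2 * 2 ^ k)) by (field; lra).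
  replace (eps * (exp (- y) * INR k)) with (INR k * (eps * exp (- y))) by ring.
  exact (Rmult_le_compat_l _ _ _ Hk H).
Qed.

Section S.
Variable u : nat -> R.
Hypothesis hu : is_u u.
Variable eps : R.
Hypothesis He : 0 < eps.
Let a := fun j : nat => Rpower 2 (- (INR j * eps)) * u j.

Lemma u_nonneg j : 0 <= u j.
Proof.
  destruct hu as [H1 H2].
  destruct (Classical_Prop.classic (exists k, j = (2 ^ k)%nat)) as [[k ->]|N].
  - rewrite H1. apply pos_INR.
  - rewrite H2. lra. intros k E. apply N. eauto.
Qed.

Lemma a_nonneg j : 0 <= a j.
Proof.
  unfold a. apply Rmult_le_pos. unfold Rpower. left; apply exp_pos. apply u_nonneg.
Qed.

Lemma a_zero k j : (2 ^ k < j < 2 ^ S k)%nat -> a j = 0.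
Proof.
  intros Hj. unfold a. destruct hu as [_ H2]. rewrite H2. ring.
  intros m ->. destruct Hj as [A B].
  apply Nat.pow_lt_mono_r_iff in A; [|lia].
  apply Nat.pow_lt_mono_r_iff in B; [|lia]. lia.
Qed.

Lemma sum_flat k d : (d < 2 ^ k)%nat ->
  sum_f_R0 a (2 ^ k + d) = sum_f_R0 a (2 ^ k).
Proof.
  induction d; intros Hd.
  - now rewrite Nat.add_0_r.
  - rewrite Nat.add_succ_r. simpl. rewrite IHd by lia.
    rewrite (a_zero k). ring. rewrite Nat.pow_succ_r'. lia.
Qed.

Lemma sum_pow k : eps * sum_f_R0 a (2 ^ k)
   <= (2 - (INR k + 2) / 2 ^ k) / (exp 1 * ln 2).
Proof.
  assert (Hl : 0 < ln 2) by (assert (H := ln_lt_2); lra).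
  assert (He1 : 0 < exp 1) by apply exp_pos.
  induction k.
  - destruct hu as [H1 H2].
    assert (U0 : u 0%nat = 0).
    { apply H2. intros m E. symmetry in E. revert E. apply Nat.pow_nonzero. lia. }
    assert (U1 : u 1%nat = 0) by (apply (H1 0%nat)).
    simpl. unfold a. rewrite U0, U1.
    replace (2 - (0 + 2) / 1) with 0 by field. unfold Rdiv. lra.
  - assert (Hp : 0 < 2 ^ k) by (apply pow_lt; lra).
    assert (E : (2 ^ S k = S (2 ^ k + (2 ^ k - 1)))%nat).
    { rewrite Nat.pow_succ_r'. assert (H := Nat.pow_nonzero 2 k). lia. }
    rewrite E. simpl sum_f_R0. rewrite sum_flat by (assert (H := Nat.pow_nonzero 2 k); lia).
    rewrite <- E. rewrite Rmult_plus_distr_l.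
    assert (T := term_bound eps (S k) He).
    unfold a at 2. destruct hu as [H1 _]. rewrite H1.
    assert (Eq : (2 - (INR k + 2) / 2 ^ k) / (exp 1 * ln 2) + INR (S k) / 2 ^ S k / (exp 1 * ln 2)
       = (2 - (INR (S k) + 2) / 2 ^ S k) / (exp 1 * ln 2)).
    { rewrite S_INR. simpl. field. lra. }
    lra.
Qed.

Lemma sum_bound n : sum_f_R0 a n <= 2 / (exp 1 * ln 2) / eps.
Proof.
  assert (Hl : 0 < ln 2) by (assert (H := ln_lt_2); lra).
  assert (He1 : 0 < exp 1) by apply exp_pos.
  assert (M : forall m d, sum_f_R0 a m <= sum_f_R0 a (m + d)).
  { intros m d. induction d. rewrite Nat.add_0_r; lra.
    rewrite Nat.add_succ_r. simpl. assert (H := a_nonneg (S (m + d))). lra. }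
  assert (Hn := Nat.pow_gt_lin_r 2 n ltac:(lia)).
  assert (P := sum_pow n).
  assert (Hp : 0 < 2 ^ n) by (apply pow_lt; lra).
  assert (0 <= (INR n + 2) / 2 ^ n).
  { apply Rmult_le_pos. assert (H := pos_INR n). lra. left; apply Rinv_0_lt_compat; lra. }
  assert (eps * sum_f_R0 a n <= 2 / (exp 1 * ln 2)).
  { assert (H2 := M n (2 ^ n - n)%nat).
    replace (n + (2 ^ n - n))%nat with (2 ^ n)%nat in H2 by lia.
    assert ((2 - (INR n + 2) / 2 ^ n) / (exp 1 * ln 2) <= 2 / (exp 1 * ln 2)).
    { unfold Rdiv. apply Rmult_le_compat_r. left; apply Rinv_0_lt_compat.
      apply Rmult_lt_0_compat; lra. unfold Rdiv in *. lra. }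
    assert (eps * sum_f_R0 a n <= eps * sum_f_R0 a (2 ^ n)).
    { apply Rmult_le_compat_l; lra. }
    lra. }
  apply (Rmult_le_reg_l eps); auto.
  replace (eps * (2 / (exp 1 * ln 2) / eps)) with (2 / (exp 1 * ln 2)) by (field; lra).
  exact H0.
Qed.

End S.

Theorem lemma8p1 (u : nat -> R) (hu : is_u u) :
  (~ exists M : R, forall j : nat, Rabs (u j) <= M) /\
  (forall eps : R, 0 < eps ->
     exists S : R,
       is_series (fun j : nat => Rpower 2 (- (INR j * eps)) * u j) S /\
       eps * S <= 2 / (exp 1 * ln 2)).
Proof.
  split.
  - intros [M HM]. destruct (INR_unbounded M) as [k Hk].
    specialize (HM (2 ^ k)%nat). destruct hu as [H1 _]. rewrite H1 in HM.
    rewrite Rabs_pos_eq in HM by apply pos_INR. lra.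
  - intros eps He.
    set (a := fun j : nat => Rpower 2 (- (INR j * eps)) * u j).
    assert (G : Un_growing (sum_f_R0 a)).
    { intros n. simpl. assert (H := a_nonneg u hu eps (S n)). unfold a. lra. }
    assert (B : has_ub (sum_f_R0 a)).
    { exists (2 / (exp 1 * ln 2) / eps). intros x [n ->].
      apply (sum_bound u hu eps He). }
    destruct (growing_cv _ G B) as [l Hl].
    exists l. split.
    + apply is_series_Reals. intros e He'. destruct (Hl e He') as [N HN].
      exists N. exact HN.
    + apply is_lim_seq_Reals in Hl.
      assert (Hb := is_lim_seq_le _ _ _ _ (sum_bound u hu eps He) Hl
                      (is_lim_seq_const (2 / (exp 1 * ln 2) / eps))).
      simpl in Hb.
      apply (Rmult_le_compat_l eps) in Hb; [|lra].
      assert (Hl2 : 0 < ln 2) by (assert (H := ln_lt_2); lra).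
      assert (He1 : 0 < exp 1) by apply exp_pos.
      replace (eps * (2 / (exp 1 * ln 2) / eps)) with (2 / (exp 1 * ln 2)) in Hb
        by (field; repeat split; lra).
      exact Hb.
Qed.
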